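(* Let $\gamma_X=(X,d_X(\cdot))$ be any $l$-Lipschitz dynamic metric space and let $\alpha\in(0,\infty)$. Then $d_{\mathtt{dyn}}(\gamma_X,\gamma_X^\alpha)\le l\alpha$.
   Context: A dynamic metric space (DMS) is a pair $\gamma_X=(X,d_X(\cdot))$ where $X$ is a nonempty finite set and $d_X(\cdot):\mathbf{R}\times X\times X\to\mathbf{R}_+$ satisfies: each $d_X(t)$ is a pseudometric, some $d_X(t_0)$ is a metric, and $t\mapsto d_X(t)(x,x')$ is continuous for all $x,x'$. It is $l$-Lipschitz if each $t\mapsto d_X(t)(x,x')$ is $l$-Lipschitz. For $t\in\mathbf{R}$, $\lfloor t\rfloor_\alpha$ is the greatest element of $\alpha\mathbf{Z}$ not exceeding $t$. The $\alpha$-discretization $\gamma_X^\alpha$ is the family $(X,d_X^{\alpha\mathbf{Z}}(t))_{t\in\mathbf{R}}$ with $d_X^{\alpha\mathbf{Z}}(t):=d_X(\lfloor t\rfloor_\alpha)$. For families $\gamma_X=(X,d_X(\cdot))$, $\gamma_Y=(Y,d_Y(\cdot))$ of pseudometrics on finite sets indexed by $t\in\mathbf{R}$ (such as DMSs and their discretizations), let $(\bigvee_I d_X)(x,x'):=\min_{s\in I}d_X(s)(x,x')$ for closed intervals $I$, and $[t]^\varepsilon=[t-\varepsilon,t+\varepsilon]$. A tripod between $X,Y$ is a set $Z$ with surjections $\varphi_X:Z\to X$, $\varphi_Y:Z\to Y$; it is an $\varepsilon$-tripod if for all $t$, $z,z'$: $(\bigvee_{[t]^\varepsilon}d_X)(\varphi_X(z),\varphi_X(z'))\le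 d_Y(t)(\varphi_Y(z),\varphi_Y(z'))+2\varepsilon$ and $(\bigvee_{[t]^\varepsilon}d_Y)(\varphi_Y(z),\varphi_Y(z'))\le d_X(t)(\varphi_X(z),\varphi_X(z'))+2\varepsilon$. $d_{\mathtt{dyn}}(\gamma_X,\gamma_Y)$ is the minimum over tripods of the infimum of $\varepsilon$ for which the tripod is an $\varepsilon$-tripod. *)

(* Defs.v *)
From HB Require Import structures.
From mathcomp Require Import all_boot all_order all_algebra.
From mathcomp Require Import all_classical all_reals all_analysis.
Set Implicit Arguments. Unset Strict Implicit. Unset Printing Implicit Defensive.
Import Order.TTheory GRing.Theory Num.Theory.
Import numFieldNormedType.Exports.
Local Open Scope classical_set_scope.
Local Open Scope ring_scope.

Section Defs.
Variable R : realType.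

Definition is_pseudometric (X : Type) (d : X -> X -> R) : Prop :=
  (forall x y, 0 <= d x y) /\ (forall x, d x x = 0) /\
  (forall x y, d x y = d y x) /\ (forall x y z, d x z <= d x y + d y z).

Definition is_metric (X : Type) (d : X -> X -> R) : Prop :=
  is_pseudometric d /\ (forall x y, d x y = 0 -> x = y).

Definition is_DMS (X : finType) (d : R -> X -> X -> R) : Prop :=
  (exists x : X, True) /\
  (forall t, is_pseudometric (d t)) /\
  (exists t0, is_metric (d t0)) /\
  (forall x x', continuous (fun t : R => d t x x')).

Definition lipschitz_DMS (X : Type) (l : R) (d : R -> X -> X -> R) : Prop :=
  forall x x' s t, `|d s x x' - d t x x'| <= l * `|s - t|.

Definition floor_alpha (alpha t : R) : R := (Num.floor (t / alpha))%:~R * alpha.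

Definition discretize (X : Type) (alpha : R) (d : R -> X -> X -> R) : R -> X -> X -> R :=
  fun t => d (floor_alpha alpha t).

(* (\bigvee_{[a,b]} d)(x,x') = min_{s in [a,b]} d(s)(x,x') *)
Definition bigvee (X : Type) (d : R -> X -> X -> R) (a b : R) (x x' : X) : R :=
  inf [set d s x x' | s in [set s | a <= s <= b]].

Definition eps_tripod (X Y Z : Type) (dX : R -> X -> X -> R) (dY : R -> Y -> Y -> R)
  (phX : Z -> X) (phY : Z -> Y) (e : R) : Prop :=
  forall t z z',
    bigvee dX (t - e) (t + e) (phX z) (phX z') <= dY t (phY z) (phY z') + 2 * e /\
    bigvee dY (t - e) (t + e) (phY z) (phY z') <= dX t (phX z) (phX z') + 2 * e.

(* d_dyn: minimum over tripods of the infimum of admissible eps,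
   i.e. the infimum over all (tripod, eps) pairs; +oo if there are none. *)
Definition d_dyn (X Y : Type) (dX : R -> X -> X -> R) (dY : R -> Y -> Y -> R) : \bar R :=
  ereal_inf [set (e%:E) | e in
    [set e : R | exists (Z : Type) (phX : Z -> X) (phY : Z -> Y),
        (forall x, exists z, phX z = x) /\ (forall y, exists z, phY z = y) /\
        eps_tripod dX dY phX phY e]].

End Defs.

(* Main.v *)
Require Import Defs.
From HB Require Import structures.
From mathcomp Require Import all_boot all_order all_algebra.
From mathcomp Require Import all_classical all_reals all_analysis.
From mathcomp Require Import lra.
Import Order.TTheory GRing.Theory Num.Theory.
Local Open Scope ring_scope.
Local Open Scope ereal_scope.

Lemma bigvee_le (R : realType) (Y : Type) (dY : R -> Y -> Y -> R) (t e : R) (x x' : Y) :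
  (0 <= e)%R -> (forall s, 0 <= dY s x x')%R ->
  (bigvee dY (t - e) (t + e) x x' <= dY t x x')%R.
Proof.
move=> e0 pos; rewrite /bigvee.
apply: ge_inf.
  by exists 0%R => _ [s _ <-]; exact: pos.
exists t => //; apply/andP; split; lra.
Qed.

Lemma floor_close (R : realType) (alpha t : R) : (0 < alpha)%R ->
  (0 <= t - floor_alpha alpha t <= alpha)%R.
Proof.
move=> a0; rewrite /floor_alpha.
have h1 := floor_le (t / alpha).
have h2 := floorD1_gt (t / alpha).
rewrite intrD in h2.
set f := ((Num.floor (t / alpha))%:~R : R) in h1 h2 *.
have E : (t / alpha * alpha = t)%R by rewrite divfK // gt_eqF.
have {}h2 : (t / alpha < f + 1)%R := h2.
have : (f * alpha <= t / alpha * alpha)%R by rewrite ler_pM2r.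
have : (t / alpha * alpha <= (f + 1) * alpha)%R by rewrite ler_pM2r // ltW.
rewrite E => A B; apply/andP; split; nra.
Qed.

Theorem propositionA3 (R : realType) (X : finType) (d : R -> X -> X -> R) (l alpha : R) :
  is_DMS d -> lipschitz_DMS l d -> (0 < alpha)%R ->
  d_dyn d (discretize alpha d) <= (l * alpha)%:E.
Proof.
move=> [[x0 _] [pm _]] lip a0.
have l0 : (0 <= l)%R.
  have := lip x0 x0 1%R 0%R; rewrite subr0 normr1 mulr1.
  by apply: le_trans.
have e0 : (0 <= l * alpha)%R by rewrite mulr_ge0 // ltW.
have key : forall t x x', (`|d t x x' - d (floor_alpha alpha t) x x'| <= l * alpha)%R.
  move=> t x x'; apply: (le_trans (lip _ _ _ _)).
  rewrite ler_wpM2l //; have /andP[h1 h2] := @floor_close _ alpha t a0.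
  by rewrite ger0_norm.
have pos : forall s x x', (0 <= d s x x')%R by move=> s x x'; case: (pm s).
rewrite /d_dyn; apply: ereal_inf_lbound.
exists (l * alpha)%R => //.
exists X, id, id; split; first by move=> x; exists x.
split; first by move=> x; exists x.
move=> t z z'; split.
- apply: (le_trans (@bigvee_le _ _ _ _ _ _ _ e0 (fun s => pos s _ _))).
  rewrite /discretize /=; move: (key t z z') e0.
  move: (d t z z') (d (floor_alpha alpha t) z z') (l * alpha)%R => a b c.
  by move=> /ler_normlP [h1 h2] _; lra.
- apply: (le_trans (@bigvee_le _ _ _ _ _ _ _ e0 (fun s => pos _ _ _))).
  rewrite /discretize /=; move: (key t z z') e0.
  move: (d t z z') (d (floor_alpha alpha t) z z') (l * alpha)%R => a b c.
  by move=> /ler_normlP [h1 h2] _; lra.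
Qed.
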